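(* For every integer $N\ge1$, with $\omega=e^{2\pi i/N}$, $$0\le\sum_{k=0}^{N-1}\dim\mathbb J^{(1)}_\gamma(\omega^k)\le2\dim(M).$$
   Context: Let $(M,g)$ be a semi-Riemannian manifold of dimension $n$ and $\gamma:[0,1]\to M$ an orientation preserving closed geodesic, extended $1$-periodically. Fix a smooth $1$-periodic family of isomorphisms $T_t:\mathbb R^n\to T_{\gamma(t)}M$ with $g(T_te_i,T_te_j)=\epsilon_i\delta_{ij}$, $\epsilon_i\in\{\pm1\}$. Let $\overline R_t=T_t^{-1}\circ R(\dot\gamma(t),T_t\,\cdot\,)\dot\gamma(t)$ (curvature $R(X,Y)=[\nabla_X,\nabla_Y]-\nabla_{[X,Y]}$) and $\Gamma_t$ defined by $T_t^{-1}\tfrac{D}{dt}\big(T_t\overline V(t)\big)=\overline V'(t)+\Gamma_t\overline V(t)$, extended $\mathbb C$-linearly to $\mathbb C^n$. The Jacobi equation (J) is $V''+2\Gamma_rV'+(\Gamma_r'+\Gamma_r^2-\overline R_r)V=0$ for $V:[0,1]\to\mathbb C^n$. For $z\in\mathbb S^1$, $\mathbb J^{(1)}_\gamma(z)=\{V\ \text{solution of (J)}:V(0)=V(1)=0,\ V'(1)=zV'(0)\}$ (complex vector space). *)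

(* Defs.v *)
From Stdlib Require Import Reals.
Open Scope R_scope.

Definition Cx : Type := (R * R)%type.
Definition C0 : Cx := (0, 0).
Definition cadd (a b : Cx) : Cx := (fst a + fst b, snd a + snd b).
Definition cmul (a b : Cx) : Cx :=
  (fst a * fst b - snd a * snd b, fst a * snd b + snd a * fst b).

Definition omega_pow (N k : nat) : Cx :=
  (cos (2 * PI * INR k / INR N), sin (2 * PI * INR k / INR N)).

Fixpoint sumR (n : nat) (f : nat -> R) : R :=
  match n with O => 0 | S m => sumR m f + f m end.
Fixpoint sumC (n : nat) (f : nat -> Cx) : Cx :=
  match n with O => C0 | S m => cadd (sumC m f) (f m) end.
Fixpoint sumN (n : nat) (f : nat -> nat) : nat :=
  match n with O => O | S m => (sumN m f + f m)%nat end.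

(** n x n real matrices depending on t: M t i j (only i, j < n matter). *)
Definition MatFam : Type := R -> nat -> nat -> R.

(** A C^n-valued curve: V i t is the i-th component (only i < n matters). *)
Definition Curve : Type := nat -> R -> Cx.

(** i-th component of the left-hand side of the Jacobi equation
      V'' + 2 G V' + (G' + G^2 - Rb) V
    at time t, for real vectors x = V(t), x1 = V'(t), x2 = V''(t).
    Since the coefficients are real, the complex equation is this
    equation for real and for imaginary parts. *)
Definition jac_lhs (n : nat) (G dG Rb : MatFam) (t : R)
  (x x1 x2 : nat -> R) (i : nat) : R :=
  x2 i
  + sumR n (fun j => 2 * G t i j * x1 j)
  + sumR n (fun j => (dG t i j + sumR n (fun k => G t i k * G t k j)
                      - Rb t i j) * x j).

(** V is a solution of (J) with V(0) = V(1) = 0 and V'(1) = z V'(0),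
    i.e. V belongs to J^(1)_gamma(z).  V1, V2 are V', V''. *)
Definition in_J1 (n : nat) (G dG Rb : MatFam) (z : Cx) (V : Curve) : Prop :=
  exists V1 V2 : Curve,
    (forall i t, (i < n)%nat ->
       derivable_pt_lim (fun s => fst (V i s)) t (fst (V1 i t)) /\
       derivable_pt_lim (fun s => snd (V i s)) t (snd (V1 i t)) /\
       derivable_pt_lim (fun s => fst (V1 i s)) t (fst (V2 i t)) /\
       derivable_pt_lim (fun s => snd (V1 i s)) t (snd (V2 i t))) /\
    (forall t i, (i < n)%nat ->
       jac_lhs n G dG Rb t (fun j => fst (V j t)) (fun j => fst (V1 j t))
               (fun j => fst (V2 j t)) i = 0 /\
       jac_lhs n G dG Rb t (fun j => snd (V j t)) (fun j => snd (V1 j t))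
               (fun j => snd (V2 j t)) i = 0) /\
    (forall i, (i < n)%nat ->
       V i 0 = C0 /\ V i 1 = C0 /\ V1 i 1 = cmul z (V1 i 0)).

Definition cindep (n : nat) (f : nat -> Curve) (d : nat) : Prop :=
  forall c : nat -> Cx,
    (forall i t, (i < n)%nat -> sumC d (fun m => cmul (c m) (f m i t)) = C0) ->
    forall m, (m < d)%nat -> c m = C0.

Definition has_cdim (n : nat) (P : Curve -> Prop) (d : nat) : Prop :=
  (exists f : nat -> Curve, (forall m, (m < d)%nat -> P (f m)) /\ cindep n f d) /\
  ~ (exists f : nat -> Curve, (forall m, (m < S d)%nat -> P (f m)) /\ cindep n f (S d)).

(* Main.v *)
Require Import Defs.
From Stdlib Require Import Reals Lra Lia Classical ClassicalEpsilon FunctionalExtensionality.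
Open Scope R_scope.


Lemma sumR_ext n f g : (forall j, (j < n)%nat -> f j = g j) -> sumR n f = sumR n g.
Proof. induction n; simpl; intros H; auto. rewrite IHn by (intros; apply H; lia). rewrite H by lia; auto. Qed.
Lemma sumR_plus n f g : sumR n (fun j => f j + g j) = sumR n f + sumR n g.
Proof. induction n; simpl. lra. rewrite IHn; lra. Qed.
Lemma sumR_scal n c f : sumR n (fun j => c * f j) = c * sumR n f.
Proof. induction n; simpl. lra. rewrite IHn; lra. Qed.
Lemma sumR_0 n : sumR n (fun _ => 0) = 0.
Proof. induction n; simpl. lra. rewrite IHn; lra. Qed.
Lemma sumR_abs_le n f c : (forall j, (j < n)%nat -> Rabs (f j) <= c) -> Rabs (sumR n f) <= INR n * c.
Proof. induction n; intros H; simpl sumR. rewrite Rabs_R0; simpl; lra.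
  rewrite S_INR. eapply Rle_trans. apply Rabs_triang.
  assert (Rabs (sumR n f) <= INR n * c) by (apply IHn; intros; apply H; lia).
  assert (Rabs (f n) <= c) by (apply H; lia). lra. Qed.
Lemma sumR_nonneg n f : (forall j, (j < n)%nat -> 0 <= f j) -> 0 <= sumR n f.
Proof. induction n; simpl; intros H. lra.
  assert (0 <= sumR n f) by (apply IHn; intros; apply H; lia). assert (0 <= f n) by (apply H; lia). lra. Qed.
Lemma sumR_term_le n f j : (forall j, (j < n)%nat -> 0 <= f j) -> (j < n)%nat -> f j <= sumR n f.
Proof. induction n; simpl; intros H Hj. lia.
  assert (0 <= sumR n f) by (apply sumR_nonneg; intros; apply H; lia).
  destruct (Nat.eq_dec j n). subst. lra.
  assert (f j <= sumR n f) by (apply IHn; [intros; apply H; lia | lia]).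
  assert (0 <= f n) by (apply H; lia). lra. Qed.

Lemma dpl_ext f t l l' : derivable_pt_lim f t l -> l = l' -> derivable_pt_lim f t l'.
Proof. intros H ->; auto. Qed.
Lemma dpl_mult f g t l1 l2 : derivable_pt_lim f t l1 -> derivable_pt_lim g t l2 ->
  derivable_pt_lim (fun s => f s * g s) t (l1 * g t + f t * l2).
Proof. intros. apply (derivable_pt_lim_mult f g); auto. Qed.
Lemma dpl_sum m (f : R -> nat -> R) f' t :
  (forall i, (i < m)%nat -> derivable_pt_lim (fun s => f s i) t (f' i)) ->
  derivable_pt_lim (fun s => sumR m (f s)) t (sumR m f').
Proof. induction m; simpl; intros H. apply derivable_pt_lim_const.
  apply (derivable_pt_lim_plus (fun s => sumR m (f s)) (fun s => f s m)).
  apply IHm; intros; apply H; lia. apply H; lia. Qed.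
Lemma cont_sum m (f : R -> nat -> R) t :
  (forall i, (i < m)%nat -> continuity_pt (fun s => f s i) t) ->
  continuity_pt (fun s => sumR m (f s)) t.
Proof. induction m; simpl; intros H. apply continuity_pt_const; intros ? ?; auto.
  apply (continuity_pt_plus (fun s => sumR m (f s)) (fun s => f s m)).
  apply IHm; intros; apply H; lia. apply H; lia. Qed.
Lemma cont_abs f t : continuity_pt f t -> continuity_pt (fun s => Rabs (f s)) t.
Proof. intros. apply (continuity_pt_comp f Rabs); auto. apply Rcontinuity_abs. Qed.

Lemma prod_le u v E : u * u <= E -> v * v <= E -> Rabs (u * v) <= E.
Proof. intros. apply Rabs_le; split; nra. Qed.

Lemma abs_between x b : Rabs x <= b -> - b <= x <= b.
Proof. intros H. pose proof (Rle_abs x). pose proof (Rle_abs (- x)). rewrite Rabs_Ropp in H1. lra. Qed.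

Lemma gronwall (E E' : R -> R) K T :
  (forall t, derivable_pt_lim E t (E' t)) -> (forall t, 0 <= E t) -> E 0 = 0 ->
  (forall t, -T <= t <= T -> Rabs (E' t) <= K * E t) ->
  forall t, -T <= t <= T -> E t = 0.
Proof.
  intros Hd Hp H0 Hb t Ht.
  destruct (Rtotal_order t 0) as [Hlt|[Heq|Hgt]].
  - set (h := fun s => E s * exp (K * s)).
    assert (Hh : forall c, derivable_pt_lim h c (E' c * exp (K * c) + E c * (exp (K * c) * K))).
    { intro c. apply (dpl_mult E (fun s => exp (K * s))). apply Hd.
      apply (derivable_pt_lim_comp (fun s => K * s) exp c (K) (exp (K * c))).
      apply dpl_ext with (K * 1). apply derivable_pt_lim_scal, derivable_pt_lim_id. ring.
      apply derivable_pt_lim_exp. }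
    destruct (MVT_cor2 h _ t 0 Hlt (fun c _ => Hh c)) as [c [Hc1 Hc2]].
    assert (Hb' := Hb c ltac:(lra)). apply abs_between in Hb'.
    assert (0 < exp (K * c)) by apply exp_pos.
    assert (h 0 = 0) by (unfold h; rewrite H0; ring).
    assert (0 <= (E' c * exp (K * c) + E c * (exp (K * c) * K))) by nra.
    assert (h t <= 0) by nra.
    unfold h in H3. assert (0 < exp (K * t)) by apply exp_pos. specialize (Hp t). nra.
  - subst; auto.
  - set (h := fun s => E s * exp (- K * s)).
    assert (Hh : forall c, derivable_pt_lim h c (E' c * exp (- K * c) + E c * (exp (- K * c) * (- K)))).
    { intro c. apply (dpl_mult E (fun s => exp (- K * s))). apply Hd.
      apply (derivable_pt_lim_comp (fun s => - K * s) exp c (- K) (exp (- K * c))).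
      apply dpl_ext with (- K * 1). apply derivable_pt_lim_scal, derivable_pt_lim_id. ring.
      apply derivable_pt_lim_exp. }
    destruct (MVT_cor2 h _ 0 t Hgt (fun c _ => Hh c)) as [c [Hc1 Hc2]].
    assert (Hb' := Hb c ltac:(lra)). apply abs_between in Hb'.
    assert (0 < exp (- K * c)) by apply exp_pos.
    assert (h 0 = 0) by (unfold h; rewrite H0; ring).
    assert ((E' c * exp (- K * c) + E c * (exp (- K * c) * - K)) <= 0) by nra.
    assert (h t <= 0) by nra.
    unfold h in H3. assert (0 < exp (- K * t)) by apply exp_pos. specialize (Hp t). nra.
Qed.


Section ODE.
Variables (n : nat) (G dG Rb : MatFam).
Hypothesis HGder : forall t i j, (i < n)%nat -> (j < n)%nat ->
             derivable_pt_lim (fun s => G s i j) t (dG t i j).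
Hypothesis HdGcont : forall i j, (i < n)%nat -> (j < n)%nat -> continuity (fun s => dG s i j).
Hypothesis HRbcont : forall i j, (i < n)%nat -> (j < n)%nat -> continuity (fun s => Rb s i j).

Definition Acoef t i j := dG t i j + sumR n (fun k => G t i k * G t k j) - Rb t i j.

Definition RSol (x x1 x2 : nat -> R -> R) : Prop :=
  (forall i t, (i < n)%nat -> derivable_pt_lim (fun s => x i s) t (x1 i t) /\
                              derivable_pt_lim (fun s => x1 i s) t (x2 i t)) /\
  (forall t i, (i < n)%nat ->
     jac_lhs n G dG Rb t (fun j => x j t) (fun j => x1 j t) (fun j => x2 j t) i = 0).

Lemma Gcont i j t : (i < n)%nat -> (j < n)%nat -> continuity_pt (fun s => G s i j) t.
Proof. intros. apply derivable_continuous_pt. exists (dG t i j). apply HGder; auto. Qed.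

Lemma Acont i j t : (i < n)%nat -> (j < n)%nat -> continuity_pt (fun s => Acoef s i j) t.
Proof. intros Hi Hj. unfold Acoef.
  apply (continuity_pt_minus (fun s => dG s i j + sumR n (fun k => G s i k * G s k j)) (fun s => Rb s i j)).
  apply (continuity_pt_plus (fun s => dG s i j) (fun s => sumR n (fun k => G s i k * G s k j))).
  apply HdGcont; auto.
  apply (cont_sum n (fun s k => G s i k * G s k j)). intros k Hk.
  apply (continuity_pt_mult (fun s => G s i k) (fun s => G s k j)); apply Gcont; auto.
  apply HRbcont; auto. Qed.

Definition Mf s := sumR n (fun i => sumR n (fun j => Rabs (G s i j) + Rabs (Acoef s i j))).

Lemma Mf_cont t : continuity_pt Mf t.
Proof. unfold Mf. apply (cont_sum n (fun s i => sumR n (fun j => Rabs (G s i j) + Rabs (Acoef s i j)))).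
  intros i Hi. apply (cont_sum n (fun s j => Rabs (G s i j) + Rabs (Acoef s i j))). intros j Hj.
  apply (continuity_pt_plus (fun s => Rabs (G s i j)) (fun s => Rabs (Acoef s i j)));
  apply cont_abs; [apply Gcont|apply Acont]; auto. Qed.

Lemma Mf_bound s i j : (i < n)%nat -> (j < n)%nat -> Rabs (G s i j) <= Mf s /\ Rabs (Acoef s i j) <= Mf s.
Proof. intros Hi Hj.
  assert (H1 : Rabs (G s i j) + Rabs (Acoef s i j) <= sumR n (fun j => Rabs (G s i j) + Rabs (Acoef s i j))).
  { apply (sumR_term_le n (fun j => Rabs (G s i j) + Rabs (Acoef s i j))); auto.
    intros; pose proof (Rabs_pos (G s i j0)); pose proof (Rabs_pos (Acoef s i j0)); lra. }
  assert (H2 : sumR n (fun j => Rabs (G s i j) + Rabs (Acoef s i j)) <= Mf s).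
  { unfold Mf. apply (sumR_term_le n (fun i => sumR n (fun j => Rabs (G s i j) + Rabs (Acoef s i j)))); auto.
    intros. apply sumR_nonneg. intros; pose proof (Rabs_pos (G s j0 j1)); pose proof (Rabs_pos (Acoef s j0 j1)); lra. }
  pose proof (Rabs_pos (G s i j)); pose proof (Rabs_pos (Acoef s i j)). lra. Qed.

Lemma jac_x2 t x x1 x2 i : jac_lhs n G dG Rb t x x1 x2 i = 0 ->
  x1 i * x2 i = - (sumR n (fun j => 2 * G t i j * (x1 i * x1 j)) + sumR n (fun j => Acoef t i j * (x1 i * x j))).
Proof. unfold jac_lhs. intros H.
  rewrite (sumR_ext n (fun j => 2 * G t i j * (x1 i * x1 j)) (fun j => x1 i * (2 * G t i j * x1 j))) by (intros; ring).
  rewrite (sumR_ext n (fun j => Acoef t i j * (x1 i * x j)) (fun j => x1 i * (Acoef t i j * x j))) by (intros; ring).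
  rewrite !sumR_scal. unfold Acoef.
  replace (x2 i) with (- (sumR n (fun j => 2 * G t i j * x1 j) +
     sumR n (fun j => (dG t i j + sumR n (fun k => G t i k * G t k j) - Rb t i j) * x j))) by lra.
  ring. Qed.

Lemma uniq x x1 x2 : RSol x x1 x2 -> (forall i, (i < n)%nat -> x i 0 = 0 /\ x1 i 0 = 0) ->
  forall t i, (i < n)%nat -> x i t = 0 /\ x1 i t = 0.
Proof.
  intros [Hd Hjc] H0 t0 i0 Hi0.
  set (E := fun t => sumR n (fun i => x i t * x i t + x1 i t * x1 i t)).
  set (E' := fun t => sumR n (fun i => 2 * x i t * x1 i t + 2 * (x1 i t * x2 i t))).
  assert (Hpos : forall t i, 0 <= x i t * x i t + x1 i t * x1 i t).
  { intros; pose proof (Rle_0_sqr (x i t)); pose proof (Rle_0_sqr (x1 i t)); unfold Rsqr in *; lra. }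
  assert (HE0 : forall t, 0 <= E t) by (intros; apply sumR_nonneg; intros; auto).
  assert (Hterm : forall t i, (i < n)%nat -> x i t * x i t <= E t /\ x1 i t * x1 i t <= E t).
  { intros t i Hi. assert (x i t * x i t + x1 i t * x1 i t <= E t).
    apply (sumR_term_le n (fun i => x i t * x i t + x1 i t * x1 i t)); auto.
    pose proof (Rle_0_sqr (x i t)); pose proof (Rle_0_sqr (x1 i t)); unfold Rsqr in *; lra. }
  assert (HdE : forall t, derivable_pt_lim E t (E' t)).
  { intro t. unfold E, E'.
    apply (dpl_sum n (fun s i => x i s * x i s + x1 i s * x1 i s)). intros i Hi.
    destruct (Hd i t Hi) as [Ha Hb].
    eapply dpl_ext.
    apply (derivable_pt_lim_plus (fun s => x i s * x i s) (fun s => x1 i s * x1 i s)).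
    apply (dpl_mult (fun s => x i s) (fun s => x i s)); eauto.
    apply (dpl_mult (fun s => x1 i s) (fun s => x1 i s)); eauto. ring. }
  set (T := Rabs t0).
  destruct (continuity_ab_maj Mf (- T) T ltac:(unfold T; pose proof (Rabs_pos t0); lra)
            (fun c _ => Mf_cont c)) as [Mx [HMx _]].
  set (B := Mf Mx).
  assert (HB : forall c i j, - T <= c <= T -> (i < n)%nat -> (j < n)%nat ->
            Rabs (G c i j) <= B /\ Rabs (Acoef c i j) <= B).
  { intros c i j Hc Hi Hj. destruct (Mf_bound c i j Hi Hj). specialize (HMx c Hc). unfold B; lra. }
  assert (HB0 : 0 <= B). { unfold B, Mf. apply sumR_nonneg; intros; apply sumR_nonneg; intros.
     pose proof (Rabs_pos (G Mx j j0)); pose proof (Rabs_pos (Acoef Mx j j0)); lra. }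
  set (K := INR n * (2 + 2 * (INR n * (2 * B) + INR n * B))).
  assert (HK : forall t, - T <= t <= T -> Rabs (E' t) <= K * E t).
  { intros t Ht. unfold E', K. rewrite Rmult_assoc. apply sumR_abs_le. intros i Hi.
    rewrite (jac_x2 t (fun j => x j t) (fun j => x1 j t) (fun j => x2 j t) i (Hjc t i Hi)).
    eapply Rle_trans. apply Rabs_triang.
    assert (Rabs (2 * x i t * x1 i t) <= 2 * E t).
    { rewrite Rmult_assoc, Rabs_mult, Rabs_right by lra.
      destruct (Hterm t i Hi). pose proof (prod_le (x i t) (x1 i t) (E t)). lra. }
    assert (Rabs (sumR n (fun j => 2 * G t i j * (x1 i t * x1 j t))) <= INR n * (2 * B * E t)).
    { apply sumR_abs_le. intros j Hj'. rewrite Rabs_mult, Rabs_mult, (Rabs_right 2) by lra.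
      destruct (HB t i j Ht Hi Hj') as [Ga Aa]. destruct (Hterm t i Hi) as [a1 a2], (Hterm t j Hj') as [b1 b2].
      pose proof (prod_le (x1 i t) (x1 j t) (E t) a2 b2).
      pose proof (Rabs_pos (G t i j)). pose proof (Rabs_pos (x1 i t * x1 j t)). nra. }
    assert (Rabs (sumR n (fun j => Acoef t i j * (x1 i t * x j t))) <= INR n * (B * E t)).
    { apply sumR_abs_le. intros j Hj'. rewrite Rabs_mult.
      destruct (HB t i j Ht Hi Hj') as [Ga Aa]. destruct (Hterm t i Hi) as [a1 a2], (Hterm t j Hj') as [b1 b2].
      pose proof (prod_le (x1 i t) (x j t) (E t) a2 b1).
      pose proof (Rabs_pos (Acoef t i j)). pose proof (Rabs_pos (x1 i t * x j t)). nra. }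
    rewrite (Rabs_mult 2 (- _)), (Rabs_right 2), Rabs_Ropp by lra.
    pose proof (Rabs_triang (sumR n (fun j => 2 * G t i j * (x1 i t * x1 j t)))
                            (sumR n (fun j => Acoef t i j * (x1 i t * x j t)))).
    assert (HE := HE0 t). nra. }
  assert (HE00 : E 0 = 0).
  { unfold E. rewrite (sumR_ext n _ (fun _ => 0)). apply sumR_0.
    intros j Hj'. destruct (H0 j Hj') as [-> ->]. ring. }
  assert (HEt := gronwall E E' K T HdE HE0 HE00 HK t0 ltac:(unfold T; apply abs_between; lra)).
  destruct (Hterm t0 i0 Hi0). rewrite HEt in *.
  split; apply Rsqr_0_uniq; unfold Rsqr; pose proof (Rle_0_sqr (x i0 t0)); pose proof (Rle_0_sqr (x1 i0 t0));
  unfold Rsqr in *; lra.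
Qed.

End ODE.


Section Lin.
Variables (n : nat) (G dG Rb : MatFam).

Lemma jac_lin t a b x x1 x2 y y1 y2 i :
  jac_lhs n G dG Rb t (fun j => a * x j + b * y j) (fun j => a * x1 j + b * y1 j)
     (fun j => a * x2 j + b * y2 j) i =
  a * jac_lhs n G dG Rb t x x1 x2 i + b * jac_lhs n G dG Rb t y y1 y2 i.
Proof. unfold jac_lhs.
  rewrite (sumR_ext n (fun j => 2 * G t i j * (a * x1 j + b * y1 j))
     (fun j => a * (2 * G t i j * x1 j) + b * (2 * G t i j * y1 j))) by (intros; ring).
  rewrite (sumR_ext n (fun j => (dG t i j + sumR n (fun k => G t i k * G t k j) - Rb t i j) * (a * x j + b * y j))
     (fun j => a * ((dG t i j + sumR n (fun k => G t i k * G t k j) - Rb t i j) * x j) +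
               b * ((dG t i j + sumR n (fun k => G t i k * G t k j) - Rb t i j) * y j))) by (intros; ring).
  rewrite !sumR_plus, !sumR_scal. ring. Qed.

Lemma RSol_lin a b x x1 x2 y y1 y2 : RSol n G dG Rb x x1 x2 -> RSol n G dG Rb y y1 y2 ->
  RSol n G dG Rb (fun i t => a * x i t + b * y i t) (fun i t => a * x1 i t + b * y1 i t)
       (fun i t => a * x2 i t + b * y2 i t).
Proof. intros [Hx Jx] [Hy Jy]. split.
  - intros i t Hi. destruct (Hx i t Hi), (Hy i t Hi). split.
    + apply (derivable_pt_lim_plus (fun s => a * x i s) (fun s => b * y i s));
      apply derivable_pt_lim_scal; auto.
    + apply (derivable_pt_lim_plus (fun s => a * x1 i s) (fun s => b * y1 i s));
      apply derivable_pt_lim_scal; auto.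
  - intros t i Hi.
    rewrite (jac_lin t a b (fun j => x j t) (fun j => x1 j t) (fun j => x2 j t)
                         (fun j => y j t) (fun j => y1 j t) (fun j => y2 j t)).
    rewrite Jx, Jy by auto. ring. Qed.

Lemma RSol_ext x x1 x2 y y1 y2 : RSol n G dG Rb x x1 x2 ->
  (forall i t, (i < n)%nat -> y i t = x i t /\ y1 i t = x1 i t /\ y2 i t = x2 i t) ->
  RSol n G dG Rb y y1 y2.
Proof. intros [Hx Jx] He. split.
  - intros i t Hi.
    assert (E0 : (fun s => y i s) = (fun s => x i s)) by (apply functional_extensionality; intro s; apply He; auto).
    assert (E1 : (fun s => y1 i s) = (fun s => x1 i s)) by (apply functional_extensionality; intro s; apply He; auto).
    rewrite E0, E1. destruct (He i t Hi) as (_ & -> & ->). auto.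
  - intros t i Hi. rewrite <- (Jx t i Hi). unfold jac_lhs.
    destruct (He i t Hi) as (_ & _ & ->). f_equal. f_equal.
    apply sumR_ext; intros j Hj; destruct (He j t Hj) as (_ & -> & _); auto.
    apply sumR_ext; intros j Hj; destruct (He j t Hj) as (-> & _ & _); auto. Qed.

Lemma RSol_zero : RSol n G dG Rb (fun _ _ => 0) (fun _ _ => 0) (fun _ _ => 0).
Proof. split. intros; split; apply derivable_pt_lim_const.
  intros. unfold jac_lhs.
  rewrite (sumR_ext n (fun j => 2 * G t i j * 0) (fun _ => 0)) by (intros; ring).
  rewrite (sumR_ext n (fun j => (dG t i j + sumR n (fun k => G t i k * G t k j) - Rb t i j) * 0) (fun _ => 0))
    by (intros; ring). rewrite sumR_0. ring. Qed.

Lemma RSol_sum D (a : nat -> R) X X1 X2 :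
  (forall m, (m < D)%nat -> RSol n G dG Rb (X m) (X1 m) (X2 m)) ->
  RSol n G dG Rb (fun i t => sumR D (fun m => a m * X m i t)) (fun i t => sumR D (fun m => a m * X1 m i t))
    (fun i t => sumR D (fun m => a m * X2 m i t)).
Proof. induction D; intros H.
  - simpl. apply RSol_zero.
  - eapply RSol_ext. apply (RSol_lin 1 (a D) _ _ _ (X D) (X1 D) (X2 D) (IHD ltac:(intros; apply H; lia)) (H D ltac:(lia))).
    intros; simpl; repeat split; ring. Qed.
End Lin.

Definition C1 : Cx := (1, 0).
Definition copp (a : Cx) : Cx := (- fst a, - snd a).
Definition csub (a b : Cx) : Cx := cadd a (copp b).
Definition cnorm2 (a : Cx) : R := fst a * fst a + snd a * snd a.
Definition cinv (a : Cx) : Cx := (fst a / cnorm2 a, - snd a / cnorm2 a).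

Lemma cx_eq (a b : Cx) : fst a = fst b -> snd a = snd b -> a = b.
Proof. destruct a, b; simpl; intros -> ->; auto. Qed.
Ltac cring := unfold csub, copp, cadd, cmul, C0, C1; apply cx_eq; cbn [fst snd]; ring.



Lemma cnorm2_pos a : a <> C0 -> 0 < cnorm2 a.
Proof. destruct a as [p q]. unfold cnorm2, C0; simpl. intros H.
  destruct (Req_dec p 0); destruct (Req_dec q 0); subst; try (exfalso; apply H; auto; fail); nra. Qed.

Lemma cmul_inv a : a <> C0 -> cmul (cinv a) a = C1.
Proof. intros H. pose proof (cnorm2_pos a H). destruct a as [p q]. unfold cinv, cnorm2, cmul, C1 in *; simpl in *.
  f_equal; field; lra. Qed.

Lemma cmul_integral a b : cmul a b = C0 -> a = C0 \/ b = C0.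
Proof. intros H. destruct (classic (a = C0)) as [|Ha]; [left; auto| right].
  assert (E : cmul (cinv a) (cmul a b) = cmul (cmul (cinv a) a) b) by cring.
  rewrite cmul_inv, H in E by auto. replace b with (cmul C1 b) by cring. rewrite <- E. cring. Qed.

Lemma C1_neq : C1 <> C0.
Proof. unfold C1, C0; intro H; injection H; lra. Qed.

Lemma sumC_ext D f g : (forall m, (m < D)%nat -> f m = g m) -> sumC D f = sumC D g.
Proof. induction D; simpl; intros H; auto. rewrite IHD by (intros; apply H; lia). rewrite H by lia; auto. Qed.
Lemma sumC_add D f g : sumC D (fun m => cadd (f m) (g m)) = cadd (sumC D f) (sumC D g).
Proof. induction D; simpl. cring. rewrite IHD. cring. Qed.
Lemma sumC_scal D a f : sumC D (fun m => cmul a (f m)) = cmul a (sumC D f).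
Proof. induction D; simpl. cring. rewrite IHD. cring. Qed.
Lemma sumC_scal_r D a f : sumC D (fun m => cmul (f m) a) = cmul (sumC D f) a.
Proof. induction D; simpl. cring. rewrite IHD. cring. Qed.
Lemma sumC_zero D : sumC D (fun _ => C0) = C0.
Proof. induction D; simpl. auto. rewrite IHD. cring. Qed.
Lemma sumC_split a b f : sumC (a + b) f = cadd (sumC a f) (sumC b (fun m => f (a + m)%nat)).
Proof. induction b; simpl. rewrite Nat.add_0_r. cring. rewrite Nat.add_succ_r. simpl. rewrite IHb. cring. Qed.
Lemma fst_sumC D f : fst (sumC D f) = sumR D (fun m => fst (f m)).
Proof. induction D; simpl; auto. rewrite IHD; auto. Qed.
Lemma snd_sumC D f : snd (sumC D f) = sumR D (fun m => snd (f m)).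
Proof. induction D; simpl; auto. rewrite IHD; auto. Qed.


Lemma sumC_opp D f : sumC D (fun m => copp (f m)) = copp (sumC D f).
Proof. induction D; simpl. cring. rewrite IHD. cring. Qed.

Lemma sumC_repl q p a F : (p < q)%nat ->
  sumC q (fun m => if Nat.eqb m p then a else F m) = cadd (sumC q F) (csub a (F p)).
Proof. induction q; intros Hp. lia. simpl.
  destruct (Nat.eq_dec p q).
  - subst. rewrite Nat.eqb_refl.
    rewrite (sumC_ext q _ F). cring. intros m Hm. destruct (Nat.eqb_spec m q); auto; lia.
  - rewrite IHq by lia. destruct (Nat.eqb_spec q p); [lia|]. cring. Qed.

Definition sw (p q m : nat) : nat := if Nat.eqb m p then q else if Nat.eqb m q then p else m.

Lemma sw_inv p q m : sw p q (sw p q m) = m.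
Proof. unfold sw.
  destruct (Nat.eqb_spec m p) as [->|Hmp].
  - destruct (Nat.eqb_spec q p) as [->|Hqp]; auto. rewrite Nat.eqb_refl. auto.
  - destruct (Nat.eqb_spec m q) as [->|Hmq].
    + rewrite Nat.eqb_refl. auto.
    + destruct (Nat.eqb_spec m p); [lia|]. destruct (Nat.eqb_spec m q); [lia|auto]. Qed.

Lemma sw_lt p q m : (p <= q)%nat -> (m < S q)%nat -> (sw p q m < S q)%nat.
Proof. unfold sw. intros. destruct (Nat.eqb_spec m p); [lia|]. destruct (Nat.eqb_spec m q); lia. Qed.

Lemma sum_swap p q F : (p <= q)%nat -> sumC (S q) (fun m => F (sw p q m)) = sumC (S q) F.
Proof. intros Hpq. simpl.
  assert (Hq : sw p q q = p) by (unfold sw; destruct (Nat.eqb_spec q p); [auto| rewrite Nat.eqb_refl; auto]).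
  rewrite Hq.
  rewrite (sumC_ext q (fun m => F (sw p q m)) (fun m => if Nat.eqb m p then F q else F m)).
  2:{ intros m Hm. unfold sw. destruct (Nat.eqb_spec m p); auto. destruct (Nat.eqb_spec m q); auto; lia. }
  destruct (Nat.eq_dec p q).
  - subst. rewrite (sumC_ext q _ F); auto. intros m Hm. destruct (Nat.eqb_spec m q); auto; lia.
  - rewrite sumC_repl by lia. cring. Qed.

Lemma elim_dep : forall n D (v : nat -> nat -> Cx), (n < D)%nat ->
  exists c, (exists m, (m < D)%nat /\ c m <> C0) /\
    forall i, (i < n)%nat -> sumC D (fun m => cmul (c m) (v m i)) = C0.
Proof.
  induction n; intros D v HD.
  - exists (fun _ => C1). split. exists 0%nat; split; [lia| apply C1_neq]. intros; lia.
  - destruct (classic (exists p, (p < D)%nat /\ v p n <> C0)) as [[p [Hp Hpn]] | Hno].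
    2:{ destruct (IHn D v ltac:(lia)) as [c [Hc Hs]]. exists c; split; auto. intros i Hi.
        destruct (Nat.eq_dec i n). subst.
        rewrite (sumC_ext D _ (fun _ => C0)). apply sumC_zero.
        intros m Hm. assert (v m n = C0) by (apply NNPP; intro; apply Hno; eauto). rewrite H; cring.
        apply Hs; lia. }
    destruct D as [|q]; [lia|].
    set (u := fun m i => v (sw p q m) i).
    set (piv := u q n).
    assert (Hpiv : piv <> C0).
    { unfold piv, u, sw. destruct (Nat.eqb_spec q p). subst; auto. rewrite Nat.eqb_refl. auto. }
    set (w := fun m i => csub (cmul piv (u m i)) (cmul (u m n) (u q i))).
    destruct (IHn q w ltac:(lia)) as [c' [[m0 [Hm0 Hc'0]] Hs']].
    set (c'' := fun m => if Nat.ltb m q then cmul (c' m) piv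
                         else copp (sumC q (fun k => cmul (c' k) (u k n)))).
    assert (Hsum : forall i, sumC (S q) (fun m => cmul (c'' m) (u m i)) =
                             sumC q (fun m => cmul (c' m) (w m i))).
    { intro i. simpl.
      rewrite (sumC_ext q (fun m => cmul (c'' m) (u m i)) (fun m => cmul (cmul (c' m) piv) (u m i))).
      2:{ intros m Hm. unfold c''. destruct (Nat.ltb_spec m q); [auto|lia]. }
      assert (Hcq : c'' q = copp (sumC q (fun k => cmul (c' k) (u k n)))).
      { unfold c''. destruct (Nat.ltb_spec q q); [lia|auto]. }
      rewrite Hcq.
      rewrite (sumC_ext q (fun m => cmul (c' m) (w m i))
        (fun m => cadd (cmul (cmul (c' m) piv) (u m i)) (copp (cmul (cmul (c' m) (u m n)) (u q i))))).
      2:{ intros m Hm. unfold w. cring. }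
      rewrite sumC_add, sumC_opp, (sumC_scal_r q (u q i) (fun m => cmul (c' m) (u m n))). cring. }
    exists (fun m => c'' (sw p q m)). split.
    + exists (sw p q m0). split. apply sw_lt; lia. rewrite sw_inv. unfold c''.
      destruct (Nat.ltb_spec m0 q); [|lia]. intro Hz. apply cmul_integral in Hz. tauto.
    + intros i Hi.
      rewrite (sumC_ext (S q) _ (fun m => (fun m => cmul (c'' m) (u m i)) (sw p q m))).
      2:{ intros m Hm. unfold u. rewrite sw_inv. auto. }
      rewrite (sum_swap p q (fun m => cmul (c'' m) (u m i))) by lia.
      rewrite Hsum. destruct (Nat.eq_dec i n).
      * subst. rewrite (sumC_ext q _ (fun _ => C0)). apply sumC_zero.
        intros m Hm. unfold w, piv. cring.
      * apply Hs'. lia.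
Qed.


Definition re (V : Curve) : nat -> R -> R := fun i t => fst (V i t).
Definition im (V : Curve) : nat -> R -> R := fun i t => snd (V i t).

Section CS.
Variables (n : nat) (G dG Rb : MatFam).

Definition CSol (V V1 V2 : Curve) : Prop :=
  RSol n G dG Rb (re V) (re V1) (re V2) /\ RSol n G dG Rb (im V) (im V1) (im V2).

Lemma CSol_lin a b U U1 U2 V V1 V2 : CSol U U1 U2 -> CSol V V1 V2 ->
  CSol (fun i t => cadd (cmul a (U i t)) (cmul b (V i t)))
       (fun i t => cadd (cmul a (U1 i t)) (cmul b (V1 i t)))
       (fun i t => cadd (cmul a (U2 i t)) (cmul b (V2 i t))).
Proof. intros [Ur Ui] [Vr Vi]. split.
  - eapply RSol_ext. apply (RSol_lin n G dG Rb 1 1 _ _ _ _ _ _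
      (RSol_lin n G dG Rb (fst a) (- snd a) _ _ _ _ _ _ Ur Ui)
      (RSol_lin n G dG Rb (fst b) (- snd b) _ _ _ _ _ _ Vr Vi)).
    intros; unfold re, im, cadd, cmul; cbn [fst snd]; repeat split; ring.
  - eapply RSol_ext. apply (RSol_lin n G dG Rb 1 1 _ _ _ _ _ _
      (RSol_lin n G dG Rb (fst a) (snd a) _ _ _ _ _ _ Ui Ur)
      (RSol_lin n G dG Rb (fst b) (snd b) _ _ _ _ _ _ Vi Vr)).
    intros; unfold re, im, cadd, cmul; cbn [fst snd]; repeat split; ring.
Qed.

Lemma CSol_ext V V1 V2 W W1 W2 : CSol V V1 V2 ->
  (forall i t, (i < n)%nat -> W i t = V i t /\ W1 i t = V1 i t /\ W2 i t = V2 i t) -> CSol W W1 W2.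
Proof. intros [Hr Hi] He. split.
  - eapply RSol_ext. apply Hr. intros i t Hn; unfold re, im; destruct (He i t Hn) as (-> & -> & ->); auto.
  - eapply RSol_ext. apply Hi. intros i t Hn; unfold re, im; destruct (He i t Hn) as (-> & -> & ->); auto. Qed.

Lemma CSol_zero : CSol (fun _ _ => C0) (fun _ _ => C0) (fun _ _ => C0).
Proof. split; apply RSol_zero. Qed.

Definition lc D (c : nat -> Cx) (f : nat -> Curve) : Curve :=
  fun i t => sumC D (fun m => cmul (c m) (f m i t)).

Lemma CSol_lc D c f f1 f2 : (forall m, (m < D)%nat -> CSol (f m) (f1 m) (f2 m)) ->
  CSol (lc D c f) (lc D c f1) (lc D c f2).
Proof. induction D; intros H.
  - apply CSol_zero.
  - eapply CSol_ext. apply (CSol_lin C1 (c D) _ _ _ (f D) (f1 D) (f2 D)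
       (IHD ltac:(intros; apply H; lia)) (H D ltac:(lia))).
    intros; unfold lc; simpl; repeat split; cring. Qed.

Hypothesis HGder : forall t i j, (i < n)%nat -> (j < n)%nat ->
             derivable_pt_lim (fun s => G s i j) t (dG t i j).
Hypothesis HdGcont : forall i j, (i < n)%nat -> (j < n)%nat -> continuity (fun s => dG s i j).
Hypothesis HRbcont : forall i j, (i < n)%nat -> (j < n)%nat -> continuity (fun s => Rb s i j).
Hypothesis HGper : forall t i j, G (t + 1) i j = G t i j.
Hypothesis HRbper : forall t i j, Rb (t + 1) i j = Rb t i j.

Lemma Cuniq W W1 W2 : CSol W W1 W2 -> (forall i, (i < n)%nat -> W i 0 = C0 /\ W1 i 0 = C0) ->
  forall t i, (i < n)%nat -> W i t = C0.
Proof. intros [Hr Hi] H0 t i Hn.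
  assert (A1 := uniq n G dG Rb HGder HdGcont HRbcont _ _ _ Hr
     ltac:(intros j Hj; destruct (H0 j Hj) as [E1 E2]; unfold re; rewrite E1, E2; auto) t i Hn).
  assert (A2 := uniq n G dG Rb HGder HdGcont HRbcont _ _ _ Hi
     ltac:(intros j Hj; destruct (H0 j Hj) as [E1 E2]; unfold im; rewrite E1, E2; auto) t i Hn).
  unfold re, im in *. apply cx_eq; simpl; tauto. Qed.

Lemma dG_per t i j : (i < n)%nat -> (j < n)%nat -> dG (t + 1) i j = dG t i j.
Proof. intros Hi Hj.
  assert (H1 : derivable_pt_lim (fun s => G (s + 1) i j) t (dG (t + 1) i j * 1)).
  { apply (derivable_pt_lim_comp (fun s => s + 1) (fun s => G s i j)).
    apply dpl_ext with (1 + 0). apply derivable_pt_lim_plus. apply derivable_pt_lim_id.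
    apply derivable_pt_lim_const. ring. apply HGder; auto. }
  assert (E : (fun s => G (s + 1) i j) = (fun s => G s i j)) by (apply functional_extensionality; intro; apply HGper).
  rewrite E in H1. rewrite <- (uniqueness_limite _ _ _ _ H1 (HGder t i j Hi Hj)). ring. Qed.

Lemma jac_per t x x1 x2 i : (i < n)%nat ->
  jac_lhs n G dG Rb (t + 1) x x1 x2 i = jac_lhs n G dG Rb t x x1 x2 i.
Proof. intros Hi. unfold jac_lhs. f_equal. f_equal.
  apply sumR_ext; intros j Hj; rewrite HGper; auto.
  apply sumR_ext; intros j Hj. rewrite dG_per, HRbper by auto. f_equal. f_equal. f_equal.
  apply sumR_ext; intros k Hk; rewrite !HGper; auto. Qed.

Lemma RSol_shift x x1 x2 : RSol n G dG Rb x x1 x2 ->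
  RSol n G dG Rb (fun i t => x i (t + 1)) (fun i t => x1 i (t + 1)) (fun i t => x2 i (t + 1)).
Proof. intros [Hd Hj]. split.
  - intros i t Hi. destruct (Hd i (t + 1) Hi) as [Ha Hb]. split.
    + apply dpl_ext with (x1 i (t + 1) * 1); [|ring].
      apply (derivable_pt_lim_comp (fun s => s + 1) (fun s => x i s)); auto.
      apply dpl_ext with (1 + 0). apply derivable_pt_lim_plus. apply derivable_pt_lim_id.
      apply derivable_pt_lim_const. ring.
    + apply dpl_ext with (x2 i (t + 1) * 1); [|ring].
      apply (derivable_pt_lim_comp (fun s => s + 1) (fun s => x1 i s)); auto.
      apply dpl_ext with (1 + 0). apply derivable_pt_lim_plus. apply derivable_pt_lim_id.
      apply derivable_pt_lim_const. ring.
  - intros t i Hi. rewrite <- jac_per by auto. apply Hj; auto. Qed.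

Lemma CSol_shift V V1 V2 : CSol V V1 V2 ->
  CSol (fun i t => V i (t + 1)) (fun i t => V1 i (t + 1)) (fun i t => V2 i (t + 1)).
Proof. intros [Hr Hi]. split; [apply (RSol_shift _ _ _ Hr) | apply (RSol_shift _ _ _ Hi)]. Qed.

Lemma bloch z V V1 V2 : CSol V V1 V2 ->
  (forall i, (i < n)%nat -> V i 0 = C0 /\ V i 1 = C0 /\ V1 i 1 = cmul z (V1 i 0)) ->
  forall t i, (i < n)%nat -> V i (t + 1) = cmul z (V i t).
Proof. intros HS HB t i Hi.
  assert (H := Cuniq _ _ _ (CSol_lin C1 (copp z) _ _ _ _ _ _ (CSol_shift _ _ _ HS) HS)).
  assert (H2 : cadd (cmul C1 (V i (t + 1))) (cmul (copp z) (V i t)) = C0).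
  { apply (H ltac:(intros j Hj; cbv beta; rewrite Rplus_0_l; destruct (HB j Hj) as (E1 & E2 & E3);
            rewrite E1, E2, E3; split; cring) t i Hi). }
  replace (V i (t + 1)) with (cadd (cadd (cmul C1 (V i (t + 1))) (cmul (copp z) (V i t))) (cmul z (V i t))) by cring.
  rewrite H2. cring. Qed.

Definition Sol (V : Curve) : Prop := exists V1 V2, CSol V V1 V2 /\ forall i, (i < n)%nat -> V i 0 = C0.

Lemma choice_nat {A : Type} (a0 : A) (D : nat) (P : nat -> A -> Prop) :
  (forall m, (m < D)%nat -> exists x, P m x) -> exists g : nat -> A, forall m, (m < D)%nat -> P m (g m).
Proof. intros H.
  assert (H' : forall m, exists x, (m < D)%nat -> P m x).
  { intro m. destruct (classic (m < D)%nat) as [Hm|Hm]. destruct (H m Hm) as [x Hx]; eauto.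
    exists a0; intro; contradiction. }
  exists (fun m => proj1_sig (constructive_indefinite_description _ (H' m))).
  intros m Hm. apply (proj2_sig (constructive_indefinite_description _ (H' m))); auto. Qed.

Lemma sol_bound D f : (forall m, (m < D)%nat -> Sol (f m)) -> cindep n f D -> (D <= n)%nat.
Proof. intros HS HI. destruct (Nat.le_gt_cases D n) as [|Hlt]; auto. exfalso.
  destruct (choice_nat (fun _ _ => C0) D (fun m V1 => exists V2, CSol (f m) V1 V2 /\ forall i, (i < n)%nat -> f m i 0 = C0))
    as [f1 Hf1]. { intros m Hm. destruct (HS m Hm) as (V1 & V2 & H); eauto. }
  destruct (choice_nat (fun _ _ => C0) D (fun m V2 => CSol (f m) (f1 m) V2 /\ forall i, (i < n)%nat -> f m i 0 = C0))
    as [f2 Hf2]. { intros m Hm. destruct (Hf1 m Hm) as (V2 & H); eauto. }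
  destruct (elim_dep n D (fun m i => f1 m i 0) Hlt) as [c [[m0 [Hm0 Hc0]] Hs]].
  apply Hc0. apply (HI c); auto. intros i t Hi.
  apply (Cuniq (lc D c f) (lc D c f1) (lc D c f2)); auto.
  apply CSol_lc. intros m Hm; apply Hf2; auto.
  intros j Hj. split; unfold lc.
  - rewrite (sumC_ext D _ (fun _ => C0)). apply sumC_zero. intros m Hm.
    destruct (Hf2 m Hm) as [_ E]. rewrite E by auto. cring.
  - apply Hs; auto. Qed.

End CS.


Lemma omega_inj N a b : (a < b)%nat -> (b < N)%nat -> omega_pow N a <> omega_pow N b.
Proof. intros Hab HbN H. unfold omega_pow in H. injection H as Hc Hs.
  set (al := 2 * PI * INR a / INR N) in *. set (be := 2 * PI * INR b / INR N) in *.
  assert (H1 : cos (be - al) = 1).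
  { rewrite cos_minus, <- Hc, <- Hs. pose proof (sin2_cos2 al). unfold Rsqr in H. lra. }
  assert (HN : 0 < INR N) by (apply lt_0_INR; lia).
  assert (Hba : INR a < INR b) by (apply lt_INR; lia).
  assert (HbN' : INR b < INR N) by (apply lt_INR; lia).
  pose proof (pos_INR a).
  set (x := PI * ((INR b - INR a) / INR N)).
  assert (Hx : be - al = 2 * x) by (unfold be, al, x; field; lra).
  assert (Hr1 : 0 < (INR b - INR a) / INR N) by (apply Rdiv_lt_0_compat; lra).
  assert (Hr2 : (INR b - INR a) / INR N < 1) by (apply (Rmult_lt_reg_r (INR N)); [lra|]; unfold Rdiv; rewrite Rmult_assoc, Rinv_l by lra; lra).
  pose proof PI_RGT_0.
  assert (0 < sin x) by (apply sin_gt_0; unfold x; nra).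
  rewrite Hx, cos_2a_sin in H1. nra. Qed.

Lemma add0_opp a b : cadd a b = C0 -> a = copp b.
Proof. intros H. replace a with (cadd (cadd a b) (copp b)) by cring. rewrite H. cring. Qed.
Lemma csub0 a b : csub a b = C0 -> a = b.
Proof. intros H. replace a with (cadd (csub a b) b) by cring. rewrite H. cring. Qed.

Lemma maxnat (P : nat -> Prop) n : P 0%nat -> (forall m, P m -> (m <= n)%nat) -> exists d, P d /\ ~ P (S d).
Proof. intros P0 HB.
  assert (forall r m, (n - m)%nat = r -> P m -> exists d, P d /\ ~ P (S d)).
  { induction r; intros m Hr Pm; destruct (classic (P (S m))) as [HS|HS]; eauto.
    - specialize (HB _ HS). lia.
    - apply (IHr (S m)); auto. specialize (HB _ HS). lia. }
  eauto. Qed.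

Section Main.
Variables (n : nat) (G dG Rb : MatFam).
Hypothesis HGder : forall t i j, (i < n)%nat -> (j < n)%nat ->
             derivable_pt_lim (fun s => G s i j) t (dG t i j).
Hypothesis HdGcont : forall i j, (i < n)%nat -> (j < n)%nat -> continuity (fun s => dG s i j).
Hypothesis HRbcont : forall i j, (i < n)%nat -> (j < n)%nat -> continuity (fun s => Rb s i j).
Hypothesis HGper : forall t i j, G (t + 1) i j = G t i j.
Hypothesis HRbper : forall t i j, Rb (t + 1) i j = Rb t i j.

Lemma J_to z V : in_J1 n G dG Rb z V -> exists V1 V2, CSol n G dG Rb V V1 V2 /\
   forall i, (i < n)%nat -> V i 0 = C0 /\ V i 1 = C0 /\ V1 i 1 = cmul z (V1 i 0).
Proof. intros (V1 & V2 & Hd & Hj & Hb). exists V1, V2. split; auto. split; split.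
  - intros i t Hi; destruct (Hd i t Hi) as (? & ? & ? & ?); unfold re; split; auto.
  - intros t i Hi; apply (Hj t i Hi).
  - intros i t Hi; destruct (Hd i t Hi) as (? & ? & ? & ?); unfold im; split; auto.
  - intros t i Hi; apply (Hj t i Hi). Qed.

Lemma J_Sol z V : in_J1 n G dG Rb z V -> Sol n G dG Rb V.
Proof. intros H. destruct (J_to z V H) as (V1 & V2 & HS & HB). exists V1, V2. split; auto.
  intros i Hi; apply HB; auto. Qed.

Lemma J_bloch z V : in_J1 n G dG Rb z V -> forall t i, (i < n)%nat -> V i (t + 1) = cmul z (V i t).
Proof. intros H. destruct (J_to z V H) as (V1 & V2 & HS & HB).
  apply (bloch n G dG Rb HGder HdGcont HRbcont HGper HRbper z V V1 V2 HS HB). Qed.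

Variable N : nat.
Definition z k := omega_pow N k.
Definition Pk k m := exists f : nat -> Curve, (forall m', (m' < m)%nat -> in_J1 n G dG Rb (z k) (f m')) /\ cindep n f m.

Lemma Pk_max k : exists d, Pk k d /\ ~ Pk k (S d).
Proof. apply (maxnat (Pk k) n).
  - exists (fun _ _ _ => C0). split. intros; lia. intros c Hc m Hm; lia.
  - intros m (f & Hf & Hi). apply (sol_bound n G dG Rb HGder HdGcont HRbcont m f); auto.
    intros; eapply J_Sol; eauto. Qed.

Definition dd k := proj1_sig (constructive_indefinite_description _ (Pk_max k)).
Lemma dd_spec k : Pk k (dd k) /\ ~ Pk k (S (dd k)).
Proof. apply (proj2_sig (constructive_indefinite_description _ (Pk_max k))). Qed.
Definition FF k := proj1_sig (constructive_indefinite_description _ (proj1 (dd_spec k))).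
Lemma FF_spec k : (forall m', (m' < dd k)%nat -> in_J1 n G dG Rb (z k) (FF k m')) /\ cindep n (FF k) (dd k).
Proof. apply (proj2_sig (constructive_indefinite_description _ (proj1 (dd_spec k)))). Qed.

Fixpoint cat (K : nat) (j : nat) : Curve :=
  match K with O => fun _ _ => C0
  | S K' => if Nat.ltb j (sumN K' dd) then cat K' j else FF K' (j - sumN K' dd) end.
Fixpoint blk (K : nat) (j : nat) : nat :=
  match K with O => O
  | S K' => if Nat.ltb j (sumN K' dd) then blk K' j else K' end.

Lemma cat_prop K j : (j < sumN K dd)%nat -> (blk K j < K)%nat /\ in_J1 n G dG Rb (z (blk K j)) (cat K j).
Proof. revert j; induction K; intros j Hj; simpl in *. lia.
  destruct (Nat.ltb_spec j (sumN K dd)).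
  - destruct (IHK j H); split; auto.
  - split; auto. apply (proj1 (FF_spec K)). lia. Qed.

Lemma JI K : (K <= N)%nat -> forall c, (forall i t, (i < n)%nat ->
    sumC (sumN K dd) (fun j => cmul (c j) (cat K j i t)) = C0) ->
  forall j, (j < sumN K dd)%nat -> c j = C0.
Proof. induction K; intros HK c Hc j Hj. simpl in Hj; lia.
  set (s := sumN K dd) in *. set (e := dd K).
  assert (Hcat1 : forall j i t, (j < s)%nat -> cat (S K) j i t = cat K j i t).
  { intros; simpl. fold s. destruct (Nat.ltb_spec j0 s); [auto|lia]. }
  assert (Hcat2 : forall m i t, cat (S K) (s + m) i t = FF K m i t).
  { intros; simpl. fold s. destruct (Nat.ltb_spec (s + m) s); [lia|]. f_equal. lia. }
  set (Af := fun i t => sumC s (fun j => cmul (c j) (cat K j i t))).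
  set (Bf := fun i t => sumC e (fun m => cmul (c (s + m)%nat) (FF K m i t))).
  assert (HAB : forall i t, (i < n)%nat -> cadd (Af i t) (Bf i t) = C0).
  { intros i t Hi. rewrite <- (Hc i t Hi). simpl sumN. fold s. fold e. rewrite sumC_split.
    unfold Af, Bf. f_equal. apply sumC_ext; intros; rewrite Hcat1; auto.
    apply sumC_ext; intros; rewrite Hcat2; auto. }
  assert (HBb : forall i t, (i < n)%nat -> Bf i (t + 1) = cmul (z K) (Bf i t)).
  { intros i t Hi. unfold Bf. rewrite <- sumC_scal. apply sumC_ext; intros m Hm.
    rewrite (J_bloch (z K) (FF K m)) by (auto; apply (proj1 (FF_spec K)); auto). cring. }
  assert (HAb : forall i t, (i < n)%nat -> Af i (t + 1) =
             sumC s (fun j => cmul (c j) (cmul (z (blk K j)) (cat K j i t)))).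
  { intros i t Hi. unfold Af. apply sumC_ext; intros j0 Hj0.
    destruct (cat_prop K j0 Hj0). rewrite (J_bloch _ _ H0) by auto. auto. }
  assert (Hc' : forall j, (j < s)%nat -> cmul (c j) (csub (z (blk K j)) (z K)) = C0).
  { apply IHK. lia. intros i t Hi.
    rewrite (sumC_ext s _ (fun j => cadd (cmul (c j) (cmul (z (blk K j)) (cat K j i t)))
                                         (copp (cmul (z K) (cmul (c j) (cat K j i t)))))).
    2:{ intros; cring. }
    rewrite sumC_add, sumC_opp, sumC_scal, <- HAb by auto. fold (Af i t).
    rewrite (add0_opp _ _ (HAB i t Hi)), (add0_opp _ _ (HAB i (t + 1) Hi)), HBb by auto. cring. }
  assert (HcA : forall j, (j < s)%nat -> c j = C0).
  { intros j0 Hj0. destruct (cmul_integral _ _ (Hc' j0 Hj0)) as [|Hz]; auto. exfalso.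
    destruct (cat_prop K j0 Hj0) as [Hb _]. apply csub0 in Hz.
    apply (omega_inj N (blk K j0) K); auto; lia. }
  assert (HA0 : forall i t, Af i t = C0).
  { intros i t. unfold Af. rewrite (sumC_ext s _ (fun _ => C0)). apply sumC_zero.
    intros; rewrite HcA by auto; cring. }
  assert (HcB : forall m, (m < e)%nat -> c (s + m)%nat = C0).
  { apply (proj2 (FF_spec K) (fun m => c (s + m)%nat)). intros i t Hi.
    pose proof (HAB i t Hi) as H. rewrite HA0 in H.
    assert (HB0 : Bf i t = C0) by (rewrite <- H; cring). exact HB0. }
  destruct (Nat.lt_ge_cases j s). auto.
  replace j with (s + (j - s))%nat by lia. apply HcB. simpl sumN in Hj. fold s e in Hj. lia. Qed.

Lemma total_bound : (sumN N dd <= n)%nat.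
Proof. apply (sol_bound n G dG Rb HGder HdGcont HRbcont (sumN N dd) (cat N)).
  - intros m Hm. destruct (cat_prop N m Hm) as [_ H]. eapply J_Sol; eauto.
  - intros c Hc. apply (JI N (le_n N) c). auto. Qed.

End Main.

Theorem lemma6p2
  (n : nat) (eps : nat -> R) (G dG Rb : MatFam)
  (Heps : forall i, (i < n)%nat -> eps i = 1 \/ eps i = -1)
  (HGder : forall t i j, (i < n)%nat -> (j < n)%nat ->
             derivable_pt_lim (fun s => G s i j) t (dG t i j))
  (HdGcont : forall i j, (i < n)%nat -> (j < n)%nat ->
             continuity (fun s => dG s i j))
  (HRbcont : forall i j, (i < n)%nat -> (j < n)%nat ->
             continuity (fun s => Rb s i j))
  (HGper : forall t i j, G (t + 1) i j = G t i j)
  (HRbper : forall t i j, Rb (t + 1) i j = Rb t i j)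
  (HGskew : forall t i j, (i < n)%nat -> (j < n)%nat ->
             eps i * G t i j + eps j * G t j i = 0)
  (HRbsym : forall t i j, (i < n)%nat -> (j < n)%nat ->
             eps i * Rb t i j = eps j * Rb t j i) :
  forall N : nat, (1 <= N)%nat ->
    exists d : nat -> nat,
      (forall k, (k < N)%nat -> has_cdim n (in_J1 n G dG Rb (omega_pow N k)) (d k)) /\
      (0 <= sumN N d)%nat /\ (sumN N d <= 2 * n)%nat.
Proof.
  intros N HN. exists (dd n G dG Rb HGder HdGcont HRbcont N). split; [|split].
  - intros k Hk. unfold has_cdim. apply (dd_spec n G dG Rb HGder HdGcont HRbcont N k).
  - lia.
  - pose proof (total_bound n G dG Rb HGder HdGcont HRbcont HGper HRbper N). lia.
Qed.
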